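(* Let $h$ be an integer with $1\le h\le u$. Then $\beta$ is a root of $S(X)$ of multiplicity at least $2^h$ if and only if, for every $i\in\{0,1,\dots,2^h-1\}$, \[ \sum_{j=0}^{2^h-1}\zeta_{2^h}^{-ij}\,\eta_{j/2^h}(-1)\,K\big(\eta_{j/2^h}\chi\big)\equiv -2^h\delta_i \pmod{2^{h+1}\mathcal{P}\,\mathbb{Z}[\zeta_{2^hk}]}, \] where $\delta_i=1$ if $T/2\equiv i\pmod{2^h}$ and $\delta_i=0$ otherwise. Equivalently, $C\,v\equiv-2^h(\delta_0,\dots,\delta_{2^h-1})^{\top}$ componentwise, where $C=(\zeta_{2^h}^{-ij})_{0\le i,j\le 2^h-1}$ and $v=\big(\eta_{j/2^h}(-1)K(\eta_{j/2^h}\chi)\big)_{0\le j\le 2^h-1}$.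
   Context: Let $p$ be an odd prime, $m\ge1$, $q=p^m$, $\alpha$ a primitive element of $\mathbb{F}_q$, and $T=q-1$; write $T=2^uT'$ with $u\ge1$ and $T'$ odd. The binary SLCE sequence $(s_n)_{n\ge0}$ is defined as follows: $s_n=1$ if $\alpha^n+1$ is a nonzero non-square of $\mathbb{F}_q$, and $s_n=0$ otherwise. Put $S(X)=\sum_{n=0}^{T-1}s_nX^n\in\mathbb{F}_2[X]$. Multiplicities of roots are taken in $\overline{\mathbb{F}_2}[X]$. Let $\beta$ be an element of an algebraic closure of $\mathbb{F}_2$ with $\beta^T=1$ and multiplicative order $k>1$ (so $k$ is odd). Let $f$ be the order of $2$ modulo $k$, and write $\zeta_N=e^{2\pi i/N}$. Let $\mathcal{P}$ be a prime ideal of $\mathbb{Z}[\zeta_k]$ containing $2$. Fix a field isomorphism $\phi:\mathbb{F}_2(\beta)=\mathbb{F}_{2^f}\to\mathbb{Z}[\zeta_k]/\mathcal{P}$, and let $\zeta$ be the unique complex $k$-th root of unity with $\phi(\beta)=\zeta+\mathcal{P}$. Multiplicative characters of $\mathbb{F}_q$ are homomorphisms $\mathbb{F}_q^*\to\mathbb{C}^*$, extended by value $0$ at $0$. For a rational $j$ with $(q-1)j\in\mathbb{Z}$, $\eta_j$ is the character with $\eta_j(\alpha)=e^{2\pi ij}$. Let $\rho=\eta_{1/2}$ be the quadratic character. Let $\chi$ be the character with $\chi(\alpha^n)=\zeta^n$. For a character $\psi$, set $K(\psi)=\sum_{x\in\mathbb{F}_q}\rho(x)\psi(1-x)$. For an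 ideal $I$ of $\mathbb{Z}[\zeta_k]$, $I\,\mathbb{Z}[\zeta_{2^hk}]$ is the ideal it generates in $\mathbb{Z}[\zeta_{2^hk}]$. *)

(* Defs.v *)
From HB Require Import structures.
From mathcomp Require Import all_boot all_order all_algebra all_field.
Set Implicit Arguments. Unset Strict Implicit. Unset Printing Implicit Defensive.
Import Order.TTheory GRing.Theory Num.Theory.
Local Open Scope ring_scope.

(* zeta N = e^{2 pi i / N}: the square of N.-root (-1) = e^{i pi / N}
   (n.-root picks the root of minimal non-negative argument). *)
Definition zeta (N : nat) : algC := (N.-root (-1)) ^+ 2.

Definition inZzeta (N : nat) (x : algC) : Prop :=
  exists g : {poly int}, x = (map_poly intr g).[zeta N].

(* x = y modulo the ideal (2^(h+1) P) Z[zeta_(2^h k)], i.e. x - y is a finite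
   sum of terms 2^(h+1) * p * r with p in P and r in Z[zeta_(2^h k)]. *)
Definition congr_ideal (h k : nat) (P : pred algC) (x y : algC) : Prop :=
  exists s : seq (algC * algC),
    (forall pr, pr \in s -> pr.1 \in P /\ inZzeta (2 ^ h * k) pr.2) /\
    x - y = \sum_(pr <- s) (2 ^ (h + 1))%:R * pr.1 * pr.2.

Section FF.
Variable F : finFieldType.

Definition nonsquare (x : F) : bool := (x != 0) && ~~ [exists y : F, y ^+ 2 == x].

Definition dlog (a x : F) : nat := find (fun n => a ^+ n == x) (iota 0 #|F|.-1).

Definition charOf (a : F) (w : algC) (x : F) : algC :=
  if x == 0 then 0 else w ^+ dlog a x.

(* eta_{j/N}: the character with eta(a) = e^{2 pi i j / N} *)
Definition etaC (a : F) (N j : nat) : F -> algC := charOf a (zeta N ^+ j).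

Definition Ksum (a : F) (psi : F -> algC) : algC :=
  \sum_(x : F) etaC a 2 1 x * psi (1 - x).

Definition slce (a : F) (n : nat) : bool := nonsquare (a ^+ n + 1).

Definition Spoly (a : F) (E : fieldType) : {poly E} :=
  \poly_(n < #|F|.-1) (if slce a n then 1 else 0).
End FF.

(* Main.v *)
Require Import Defs.
From HB Require Import structures.
From mathcomp Require Import all_boot all_order all_algebra all_field.
From mathcomp Require Import zify ring.
Set Implicit Arguments. Unset Strict Implicit. Unset Printing Implicit Defensive.
Import Order.TTheory GRing.Theory Num.Theory.
Local Open Scope ring_scope.

Section FFL.
Variable F : finFieldType.
Variable a : F.
Local Notation T := (#|F|.-1).
Hypothesis Ha : T.-primitive_root a.
Hypothesis HT : (0 < T)%N.

Lemma unit_pow (x : F) : x != 0 -> x ^+ T = 1.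
Proof.
move=> x0; have := expf_card x.
have -> : #|F| = T.+1 by rewrite prednK // (cardD1 (0:F)).
by rewrite exprS -{3}(mulr1 x) => /(mulfI x0).
Qed.

Lemma dlogP x : x != 0 -> a ^+ dlog a x = x /\ (dlog a x < T)%N.
Proof.
move=> x0; have [i Hi] := prim_rootP Ha (unit_pow x0).
have hs : has (fun n => a ^+ n == x) (iota 0 T).
  by apply/hasP; exists (val i); [rewrite mem_iota /=; apply: ltn_ord | rewrite Hi].
have := nth_find 0 hs; rewrite has_find size_iota in hs.
by rewrite /dlog nth_iota //= add0n => /eqP.
Qed.

Lemma a_neq0 : a != 0.
Proof. apply/eqP=> a0; have := prim_expr_order Ha; rewrite a0 expr0n eqn0Ngt HT /=.
by move/eqP; rewrite eq_sym oner_eq0. Qed.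

Lemma dlog_exp m : (m < T)%N -> dlog a (a ^+ m) = m.
Proof.
move=> mT; have [H1 H2] := dlogP (expf_neq0 m a_neq0).
by apply/eqP; move/eqP: H1; rewrite (eq_prim_root_expr Ha) !modn_small.
Qed.

Lemma charOf_exp (w : algC) m : w ^+ T = 1 -> charOf a w (a ^+ m) = w ^+ m.
Proof.
move=> wT; rewrite /charOf (negbTE (expf_neq0 m a_neq0)).
have [H1 _] := dlogP (expf_neq0 m a_neq0).
move/eqP: H1; rewrite (eq_prim_root_expr Ha) => /eqP H.
by rewrite -(expr_mod _ wT) H expr_mod.
Qed.

Lemma charOf0 w : charOf a w 0 = 0.
Proof. by rewrite /charOf eqxx. Qed.

Lemma charOf_mul (w : algC) x y : w ^+ T = 1 ->
  charOf a w (x * y) = charOf a w x * charOf a w y.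
Proof.
move=> wT; have [->|x0] := eqVneq x 0; first by rewrite mul0r charOf0 mul0r.
have [->|y0] := eqVneq y 0; first by rewrite mulr0 charOf0 mulr0.
have [Hx _] := dlogP x0; have [Hy _] := dlogP y0.
by rewrite -Hx -Hy -exprD !charOf_exp // exprD.
Qed.

Lemma sum_F (f : F -> algC) :
  \sum_(x : F) f x = f 0 + \sum_(m < T) f (a ^+ m).
Proof.
rewrite (bigD1 0) //=; congr (_ + _).
rewrite (reindex_onto (fun m : 'I_T => a ^+ m) (fun x => insubd (Ordinal HT) (dlog a x))) /=.
  apply: eq_bigl => m; rewrite expf_neq0 ?a_neq0 //= dlog_exp //.
  by apply/eqP/val_inj; rewrite val_insubd /= ltn_ord.
move=> x x0; have [H1 H2] := dlogP x0; by rewrite val_insubd H2.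
Qed.

Lemma T_even : (2 %| T)%N -> a ^+ (T./2) = -1.
Proof.
move=> T2; have e : (T = (T./2).*2)%N.
  by move: T2; rewrite dvdn2 => /negbTE o; rewrite -[LHS](odd_double_half T) o add0n.
set b := a ^+ T./2.
have b2 : b ^+ 2 = 1 by rewrite -exprM muln2 -e prim_expr_order.
have b1 : b != 1.
  rewrite /b -(prim_order_dvd Ha); apply/negP => /dvdn_leq.
  have : (0 < T./2)%N by rewrite half_gt0; case: (T) e HT => [|[|t]] //.
  move=> h /(_ h) le; move: e le h; rewrite -addnn; move: (T./2) (T) => t u; lia.
have : (b - 1) * (b + 1) = 0 by rewrite mulrDr mulr1 mulrBl mul1r addrA subrK -expr2 b2 subrr.
move/eqP; rewrite mulf_eq0 subr_eq0 (negbTE b1) /= addr_eq0 => /eqP //.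
Qed.

End FFL.
Lemma zeta_pow N : (0 < N)%N -> zeta N ^+ N = 1.
Proof. by move=> N0; rewrite /zeta -exprM mulnC exprM rootCK // sqrrN expr1n. Qed.

Lemma zeta2 : zeta 2 = -1.
Proof. by rewrite /zeta rootCK. Qed.

Section FFL2.
Variable F : finFieldType.
Variable a : F.
Local Notation T := (#|F|.-1).
Hypothesis Ha : T.-primitive_root a.
Hypothesis HT : (0 < T)%N.
Hypothesis T2 : (2 %| T)%N.

Lemma sq_iff y : y != 0 -> [exists x, x ^+ 2 == y] = ~~ odd (dlog a y).
Proof.
move=> y0; have [Hy Hl] := dlogP Ha y0.
apply/existsP/idP.
  case=> x /eqP xy; have x0 : x != 0 by apply: contraNneq y0 => x0; rewrite -xy x0 expr0n.
  have [Hx _] := dlogP Ha x0.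
  have E : a ^+ (dlog a x * 2) == a ^+ dlog a y by rewrite exprM Hx Hy xy.
  move: E; rewrite (eq_prim_root_expr Ha) => /eqP H.
  have : (dlog a y %% 2 = (dlog a x * 2) %% 2)%N.
    by rewrite -(modn_dvdm _ T2) -H (modn_dvdm _ T2).
  by rewrite modnMl modn2; case: (odd _).
move=> ev; exists (a ^+ (dlog a y)./2); apply/eqP.
rewrite -exprM muln2 -[in RHS]Hy; congr (_ ^+ _).
by rewrite -[in RHS](odd_double_half (dlog a y)) (negbTE ev) add0n.
Qed.

Lemma charm1 y : y != 0 -> charOf a (-1) y = (-1) ^+ odd (dlog a y).
Proof. by move=> y0; rewrite /charOf (negbTE y0) signr_odd. Qed.

Lemma slce_rel m : 2 * (slce a m : nat)%:R =
  1 - etaC a 2 1 (a ^+ m + 1) - ((a ^+ m + 1 == 0) : nat)%:R :> algC.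
Proof.
rewrite /slce /nonsquare /etaC expr1 zeta2.
have [->|y0] := eqVneq (a ^+ m + 1) 0; first by rewrite charOf0 /= mulr0 subr0 subrr.
rewrite /= sq_iff // charm1 // negbK subr0.
by case: (odd _) => /=; rewrite ?expr1 ?expr0 ?mulr1 ?mulr0 ?subrr // opprK.
Qed.

Lemma half_lt : (T./2 < T)%N.
Proof.
have e : T = ((T./2) + (T./2))%N.
  by rewrite addnn -[LHS](odd_double_half T); move: T2; rewrite dvdn2 => /negbTE ->.
move: HT; rewrite e; move: (T./2) => t; lia.
Qed.

Lemma neg1_exp m : (m < T)%N -> (a ^+ m + 1 == 0) = (m == T./2).
Proof.
move=> mT; rewrite addr_eq0 -(T_even Ha HT T2) (eq_prim_root_expr Ha) !modn_small //.
exact: half_lt.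
Qed.

Lemma dlog_neg1 : dlog a (-1) = T./2.
Proof. by rewrite -(T_even Ha HT T2) dlog_exp // half_lt. Qed.
End FFL2.
Lemma dvd_shift n i m : (i < n)%N -> (n %| n - i + m)%N = (m %% n == i)%N.
Proof.
move=> iN; have n0 : (0 < n)%N by lia.
rewrite /dvdn -modnDmr; have := ltn_pmod m n0; move: (m %% n)%N => r rn.
case: (ltnP r i) => ri.
  rewrite modn_small; last by lia.
  by apply/idP/idP => /eqP; lia.
have ->: (n - i + r = r - i + n)%N by lia.
rewrite modnDr modn_small; last by lia.
by apply/idP/idP => /eqP; lia.
Qed.

Lemma geom0 (x : algC) n : x != 1 -> x ^+ n = 1 -> \sum_(j < n) x ^+ j = 0.
Proof.
move=> x1 xn; have := subrX1 x n; rewrite xn subrr => /esym/eqP.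
by rewrite mulf_eq0 subr_eq0 (negbTE x1) /= => /eqP.
Qed.

Lemma geom_prim n (w : algC) e : n.-primitive_root w ->
  \sum_(j < n) (w ^+ e) ^+ j = ((n %| e)%N : nat)%:R * n%:R.
Proof.
move=> Hw; rewrite (prim_order_dvd Hw); case: eqP => [->|ne].
  by rewrite (eq_bigr (fun _ => 1)) => [|j _]; rewrite ?expr1n // sumr_const card_ord mul1r.
rewrite mul0r geom0 //; first by apply/eqP.
by rewrite -exprM mulnC exprM (prim_expr_order Hw) expr1n.
Qed.

Lemma orth n (w : algC) (Hw : n.-primitive_root w) i m : (i < n)%N ->
  \sum_(j < n) w ^- (i * j) * w ^+ (j * m) = ((m %% n == i)%N : nat)%:R * n%:R.
Proof.
move=> iN; rewrite -dvd_shift // -(geom_prim _ Hw); apply: eq_bigr => j _.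
have w0 : w != 0.
  apply/eqP => w0; have := prim_expr_order Hw; rewrite w0 expr0n.
  by case: (n) iN => // n' _ /eqP; rewrite eq_sym oner_eq0.
have -> : w ^- (i * j) = w ^+ ((n - i) * j).
  apply: (mulIf (expf_neq0 (i * j) w0)); rewrite mulVf ?expf_neq0 //.
  by rewrite -exprD -mulnDl subnK ?(ltnW iN) // exprM (prim_expr_order Hw) expr1n.
by rewrite -exprD -exprM; congr (_ ^+ _); lia.
Qed.
Section Ident.
Variable F : finFieldType.
Variable a : F.
Local Notation T := (#|F|.-1).
Hypothesis Ha : T.-primitive_root a.
Hypothesis HT : (0 < T)%N.
Hypothesis T2 : (2 %| T)%N.
Variable n : nat.
Hypothesis Hn : (n %| T)%N.
Hypothesis Hw : n.-primitive_root (zeta n).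
Variable z : algC.
Hypothesis zT : z ^+ T = 1.
Hypothesis zT2 : z ^+ T./2 = 1.
Hypothesis zn : z ^+ n != 1.

Local Notation w := (zeta n).

Definition Xs i := \sum_(m < T) (((m %% n == i)%N && slce a m) : nat)%:R * z ^+ m.

Lemma wT j : (w ^+ j) ^+ T = 1.
Proof. by rewrite -exprM mulnC exprM; move: Hn; rewrite (prim_order_dvd Hw) => /eqP ->; rewrite expr1n. Qed.

Lemma n_pos : (0 < n)%N.
Proof. by case: n Hw => //; rewrite /primitive_root_of. Qed.

Lemma step1 j : etaC a n j (-1) * Ksum a (fun x => etaC a n j x * charOf a z x)
  = \sum_(m < T) etaC a 2 1 (a ^+ m + 1) * (w ^+ j) ^+ m * z ^+ m.
Proof.
rewrite /Ksum /etaC mulr_sumr.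
set c := charOf a (w ^+ j); set cz := charOf a z.
have e x : c (-1) * (charOf a (zeta 2 ^+ 1) x * (c (1 - x) * cz (1 - x)))
    = charOf a (zeta 2 ^+ 1) x * (c (x - 1) * cz (x - 1)).
  have -> : x - 1 = (-1) * (1 - x) by rewrite mulN1r opprB.
  have cz1 : cz (-1) = 1 by rewrite /cz -(T_even Ha HT T2) (charOf_exp Ha HT) ?zT2.
  rewrite /c /cz !(charOf_mul Ha) ?wT // -/cz cz1 mul1r.
  by rewrite mulrCA !mulrA.
rewrite (eq_bigr _ (fun x _ => e x)) (reindex_inj (@addIr _ 1)) /=.
rewrite (sum_F Ha HT) /= addrK add0r /c /cz !charOf0 !mulr0 add0r.
apply: eq_bigr => m _; rewrite addrK !(charOf_exp Ha HT) ?wT //.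
by rewrite mulrA.
Qed.

Lemma w0 : w != 0.
Proof.
apply/eqP => e; have := prim_expr_order Hw; rewrite e expr0n.
by rewrite eqn0Ngt n_pos /= => /eqP; rewrite eq_sym oner_eq0.
Qed.

Lemma B0 i : (i < n)%N -> \sum_(m < T) ((m %% n == i)%N : nat)%:R * z ^+ m = 0.
Proof.
move=> iN; apply: (mulfI (_ : n%:R != 0 :> algC)).
  by rewrite pnatr_eq0 -lt0n n_pos.
rewrite mulr0 mulr_sumr.
rewrite (eq_bigr (fun m : 'I_T => \sum_(j < n) w ^- (i * j) * (w ^+ j * z) ^+ m)).
  rewrite exchange_big /= big1 // => j _; rewrite -mulr_sumr geom0 ?mulr0 //.
    apply/eqP => e; move/eqP: zn; apply.
    have : (w ^+ j * z) ^+ n = 1 by rewrite e expr1n.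
    by rewrite exprMn -exprM mulnC exprM (prim_expr_order Hw) expr1n mul1r.
  by rewrite exprMn wT zT mulr1.
move=> m _; rewrite mulrA (mulrC n%:R) -(orth Hw) // mulr_suml; apply: eq_bigr => j _.
have -> : (w ^+ j * z) ^+ m = (w ^+ j) ^+ m * z ^+ m by exact: exprMn.
by rewrite -exprM mulrA.
Qed.

Lemma main_ident i : (i < n)%N ->
  \sum_(j < n) w ^- (i * j) * etaC a n j (-1)
       * Ksum a (fun x => etaC a n j x * charOf a z x)
  = - (2 * n)%:R * Xs i - n%:R * ((T./2 %% n == i)%N : nat)%:R.
Proof.
move=> iN.
set A := \sum_(m < T) ((m %% n == i)%N : nat)%:R * (etaC a 2 1 (a ^+ m + 1) * z ^+ m).
have L : \sum_(j < n) w ^- (i * j) * etaC a n j (-1)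
       * Ksum a (fun x => etaC a n j x * charOf a z x) = n%:R * A.
  rewrite (eq_bigr (fun j : 'I_n => \sum_(m < T) w ^- (i * j) * w ^+ (j * m)
        * (etaC a 2 1 (a ^+ m + 1) * z ^+ m))); last first.
    move=> j _; rewrite -mulrA step1 mulr_sumr; apply: eq_bigr => m _.
    by rewrite (exprM w j m) -!mulrA; congr (_ * _); rewrite mulrCA.
  rewrite exchange_big /= /A mulr_sumr; apply: eq_bigr => m _.
  by rewrite -mulr_suml orth // [RHS]mulrA (mulrC n%:R).
have X2 : 2 * Xs i = - A - ((T./2 %% n == i)%N : nat)%:R.
  rewrite /Xs mulr_sumr.
  rewrite (eq_bigr (fun m : 'I_T => ((m %% n == i)%N : nat)%:R * z ^+ m
       - ((m %% n == i)%N : nat)%:R * (etaC a 2 1 (a ^+ m + 1) * z ^+ m)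
       - ((m %% n == i)%N : nat)%:R * ((a ^+ m + 1 == 0) : nat)%:R * z ^+ m)); last first.
    move=> m _; have S := slce_rel Ha T2 m; rewrite -mulnb natrM.
    set s := (slce a m : nat)%:R in S *; set c := ((m %% n == i)%N : nat)%:R.
    set Z := z ^+ m; have -> : 2 * (c * s * Z) = c * (2 * s) * Z by ring.
    rewrite S; ring.
  rewrite !sumrB B0 // sub0r /A; congr (_ - _).
  rewrite (bigD1 (Ordinal (half_lt Ha HT T2))) //= big1 ?addr0.
    by rewrite (neg1_exp Ha HT T2 (half_lt Ha HT T2)) eqxx mulr1 zT2 mulr1.
  move=> m /eqP mh; rewrite (neg1_exp Ha HT T2 (ltn_ord m)).
  have -> : (m == T./2 :> nat) = false by apply/eqP => e; apply: mh; apply: val_inj.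
  by rewrite mulr0 mul0r.
rewrite L.
have -> : - (2 * n)%:R * Xs i = - (n%:R * (2 * Xs i)) by rewrite natrM mulNr mulrA (mulrC 2%:R).
rewrite X2; ring.
Qed.
End Ident.
Lemma gpoly_eval (R : comNzRingType) T (c : nat -> nat) (x : R) :
  (map_poly intr (\poly_(m < T) ((c m)%:R : int))).[x] = \sum_(m < T) (c m)%:R * x ^+ m.
Proof.
rewrite (@horner_coef_wide _ T); last first.
  by rewrite /map_poly (leq_trans (size_poly _ _)) // size_poly.
by apply: eq_bigr => m _; rewrite coef_map coef_poly ltn_ord /= rmorph_nat.
Qed.

Section PolyE.
Variable E : fieldType.
Hypothesis hchE : 2 \in [pchar E].

Lemma two0 : (2%:R : {poly E}) = 0.
Proof. by rewrite -polyC_natr (pcharf0 hchE). Qed.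

Lemma frob (x y : {poly E}) h : (x - y) ^+ (2 ^ h) = x ^+ (2 ^ h) - y ^+ (2 ^ h).
Proof.
elim: h => [|h IH]; first by rewrite !expr1.
have H (u v : {poly E}) : (u - v) ^+ 2 = u ^+ 2 - v ^+ 2 + 2%:R * (v ^+ 2 - u * v) by ring.
by rewrite expnS mulnC !exprM IH H two0 mul0r addr0.
Qed.

Variable beta : E.
Hypothesis beta0 : beta != 0.
Variable T n : nat.
Hypothesis n0 : (0 < n)%N.
Variable s : nat -> bool.

Local Notation c := (beta ^+ n).
Local Notation D := ('X^n - c%:P : {poly E}).

Definition Cf i := \sum_(m < T) (((m %% n == i)%N && s m) : nat)%:R * c ^+ (m %/ n).

Lemma R_eq : \poly_(i < n) Cf i =
  \sum_(m < T) (if s m then c ^+ (m %/ n) else 0) *: 'X^(m %% n).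
Proof.
apply/polyP => i; rewrite coef_poly coef_sum.
case: ltnP => iN.
  rewrite /Cf; apply: eq_bigr => m _; rewrite coefZ coefXn.
  by case: (s m); rewrite ?andbT ?andbF ?mul0r ?mulr0 // eq_sym mulrC.
rewrite big1 // => m _; rewrite coefZ coefXn.
have -> : (i == m %% n)%N = false.
  by apply/negbTE; apply: contraTneq iN => ->; rewrite -ltnNge ltn_pmod.
by rewrite mulr0.
Qed.

Lemma dvd_SR : D %| \poly_(m < T) (if s m then 1 else 0) - \poly_(i < n) Cf i.
Proof.
rewrite R_eq poly_def -sumrB.
apply: (big_ind (fun p => D %| p)); [exact: dvdp0 | exact: dvdp_add|] => m _.
case: (s m); last by rewrite !scale0r subr0 dvdp0.
rewrite scale1r.
have -> : 'X^m - c ^+ (m %/ n) *: 'X^(m %% n) =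
   ('X^n ^+ (m %/ n) - (c%:P) ^+ (m %/ n)) * 'X^(m %% n) :> {poly E}.
  rewrite mulrBl -(exprM 'X) -exprD -polyC_exp mul_polyC; congr (_ - _).
  by rewrite mulnC -divn_eq.
apply: dvdp_mulr; rewrite subrXX; exact: dvdp_mulIl.
Qed.

Lemma divE_aux : D %| \poly_(m < T) (if s m then 1 else 0) <->
  forall i, (i < n)%N -> Cf i = 0.
Proof.
have sD : size D = n.+1 by rewrite size_XnsubC.
have -> : (D %| \poly_(m < T) (if s m then 1 else 0)) = (D %| \poly_(i < n) Cf i).
  by rewrite -[in RHS](dvdp_addr _ dvd_SR) subrK.
split.
  move=> dv; have R0 : \poly_(i < n) Cf i = 0.
    apply/eqP; apply: contraTT dv => nz; apply/negP => /(dvdp_leq nz).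
    by rewrite sD ltnNge (size_poly n Cf).
  by move=> i iN; have := congr1 (fun p : {poly E} => p`_i) R0; rewrite coef_poly iN coef0.
move=> H; suff -> : \poly_(i < n) Cf i = 0 by exact: dvdp0.
by apply/polyP => i; rewrite coef_poly coef0; case: ltnP => // iN; rewrite H.
Qed.

Lemma Cf_beta i : (i < n)%N -> Cf i * beta ^+ i =
  \sum_(m < T) (((m %% n == i)%N && s m) : nat)%:R * beta ^+ m.
Proof.
move=> iN; rewrite /Cf mulr_suml; apply: eq_bigr => m _.
case: eqP => [<-|]; last by rewrite /= !mul0r.
by rewrite -mulrA -exprM -exprD mulnC -divn_eq.
Qed.

Lemma divE : D %| \poly_(m < T) (if s m then 1 else 0) <->
  forall i, (i < n)%N -> \sum_(m < T) (((m %% n == i)%N && s m) : nat)%:R * beta ^+ m = 0.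
Proof.
rewrite divE_aux; split => H i iN; have := H i iN; rewrite -Cf_beta //.
  by move=> ->; rewrite mul0r.
by move/eqP; rewrite mulf_eq0 expf_eq0 (negbTE beta0) andbF orbF => /eqP.
Qed.
End PolyE.
Section Trace.
Variables (k h : nat).
Hypothesis hk1 : (1 < k)%N.
Hypothesis kodd : odd k.
Hypothesis hh1 : (0 < h)%N.
Variable z : algC.
Hypothesis zprim : k.-primitive_root z.
Variable E : fieldType.
Variable beta : E.

Local Notation N := (2 ^ h * k)%N.

Definition inZz (x : algC) := exists G : {poly int}, x = (map_poly intr G).[z].
Definition Pz (x : algC) := exists G : {poly int},
  x = (map_poly intr G).[z] /\ root (map_poly intr G) beta.

Lemma inZz_int (m : int) : inZz m%:~R.
Proof. by exists m%:P; rewrite map_polyC hornerC. Qed.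

Lemma inZz_exp i : inZz (z ^+ i).
Proof. by exists ('X^i); rewrite map_polyXn hornerXn. Qed.

Lemma inZzD x y : inZz x -> inZz y -> inZz (x + y).
Proof. by move=> [F ->] [G ->]; exists (F + G); rewrite rmorphD hornerD. Qed.

Lemma inZzM x y : inZz x -> inZz y -> inZz (x * y).
Proof. by move=> [F ->] [G ->]; exists (F * G); rewrite rmorphM hornerM. Qed.

Lemma inZz_sum (I : Type) (r : seq I) (f : I -> algC) :
  (forall i, inZz (f i)) -> inZz (\sum_(i <- r) f i).
Proof.
move=> H; elim: r => [|i r IH]; first by rewrite big_nil; have := inZz_int 0.
by rewrite big_cons; apply: inZzD.
Qed.

Lemma Pz0 : Pz 0.
Proof. by exists 0; rewrite !rmorph0 horner0 root0. Qed.

Lemma PzD x y : Pz x -> Pz y -> Pz (x + y).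
Proof.
move=> [F [-> rF]] [G [-> rG]]; exists (F + G); rewrite !rmorphD hornerD; split => //.
by rewrite /root hornerD (eqP rF) (eqP rG) addr0.
Qed.

Lemma PzM x y : Pz x -> inZz y -> Pz (x * y).
Proof.
move=> [F [-> rF]] [G ->]; exists (F * G); rewrite !rmorphM hornerM; split => //.
by rewrite /root hornerM (eqP rF) mul0r.
Qed.

Lemma kcop : coprime k (2 ^ h).
Proof. by rewrite coprime_pexpr // coprimen2. Qed.

Definition Lx s := chinese k (2 ^ h) 1 s.*2.+1.

Lemma L_modk s : (Lx s %% k = 1)%N.
Proof. by rewrite /Lx (chinese_modl kcop) modn_small. Qed.

Lemma L_mod2h s : (Lx s = s.*2.+1 %[mod 2 ^ h])%N.
Proof. by rewrite /Lx (chinese_modr kcop). Qed.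

Lemma two_dvd : (2 %| 2 ^ h)%N.
Proof. by rewrite -{1}(expn1 2) dvdn_exp2l. Qed.

Lemma copL s : coprime (Lx s) N.
Proof.
rewrite coprimeMr; apply/andP; split.
  have o2 : odd (2 ^ h) = false by rewrite oddX orbF; apply/negbTE; rewrite -lt0n.
  by rewrite coprime_pexpr // coprimen2 -(odd_mod _ o2) L_mod2h odd_mod // /= odd_double.
by rewrite -coprime_modl L_modk coprime1n.
Qed.

Definition U s : {rmorphism algC -> algC} := sval (Qn_aut_exists (copL s)).

Lemma UP s x : x ^+ N = 1 -> U s x = x ^+ Lx s.
Proof. exact: (svalP (Qn_aut_exists (copL s))). Qed.

Lemma U_fixk s x : x ^+ k = 1 -> U s x = x.
Proof.
move=> xk; rewrite UP; last by rewrite mulnC exprM xk expr1n.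
by rewrite -(expr_mod _ xk) L_modk expr1.
Qed.

Lemma U_2h s w : w ^+ (2 ^ h) = 1 -> U s w = w ^+ s.*2.+1.
Proof.
move=> wk; rewrite UP; last by rewrite exprM wk expr1n.
by rewrite -(expr_mod _ wk) L_mod2h expr_mod.
Qed.

Lemma U_zpoly s G : U s ((map_poly intr G).[z]) = (map_poly intr G).[z].
Proof.
rewrite -horner_map /= -map_poly_comp (U_fixk s (prim_expr_order zprim)).
by congr (_.[_]); apply: eq_map_poly => m /=; rewrite rmorph_int.
Qed.

Definition Tr x := \sum_(s < 2 ^ h.-1) U s x.

Lemma TrD x y : Tr (x + y) = Tr x + Tr y.
Proof. by rewrite /Tr -big_split; apply: eq_bigr => s _; rewrite rmorphD. Qed.

Lemma TrN x : Tr (- x) = - Tr x.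
Proof. by rewrite /Tr -sumrN; apply: eq_bigr => s _; rewrite rmorphN. Qed.

Lemma Tr_fixM p x : inZz p -> Tr (p * x) = p * Tr x.
Proof.
move=> [G ->]; rewrite /Tr mulr_sumr; apply: eq_bigr => s _.
by rewrite rmorphM U_zpoly.
Qed.

Lemma Tr_sum (I : Type) (r : seq I) (f : I -> algC) :
  Tr (\sum_(i <- r) f i) = \sum_(i <- r) Tr (f i).
Proof.
elim: r => [|i r IH]; first by rewrite !big_nil /Tr big1 // => s _; rewrite rmorph0.
by rewrite !big_cons TrD IH.
Qed.

Definition e1 := chinese k (2 ^ h) 1 0.
Definition e2 := chinese k (2 ^ h) 0 1.

Lemma Tr_root x : x ^+ N = 1 -> exists c, inZz c /\ Tr x = (2 ^ h.-1)%:R * c.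
Proof.
move=> xN; set y := x ^+ e1; set w := x ^+ e2.
have k0 : (0 < k)%N by case: (k) hk1.
have yk : y ^+ k = 1.
  have H : (N %| e1 * k)%N.
    rewrite dvdn_pmul2r //.
    by rewrite /dvdn /e1 (chinese_modr kcop) mod0n.
  by rewrite /y -exprM -(expr_mod _ xN) (eqnP H) expr0.
have w2 : w ^+ (2 ^ h) = 1.
  have H : (N %| e2 * 2 ^ h)%N.
    rewrite mulnC dvdn_pmul2r ?expn_gt0 //.
    by rewrite /dvdn /e2 (chinese_modl kcop) mod0n.
  by rewrite /w -exprM -(expr_mod _ xN) (eqnP H) expr0.
have xyw : x = y * w.
  have H : (e1 + e2 == 1 %[mod k * 2 ^ h])%N.
    rewrite (chinese_remainder kcop); apply/andP; split; apply/eqP;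
    by rewrite -modnDm /e1 /e2 ?(chinese_modl kcop) ?(chinese_modr kcop) modnDm.
  rewrite mulnC in H.
  by rewrite /y /w -exprD -(expr_mod _ xN) (eqP H) (expr_mod _ xN) expr1.
have Tx : Tr x = y * w * \sum_(s < 2 ^ h.-1) (w ^+ 2) ^+ s.
  rewrite /Tr mulr_sumr; apply: eq_bigr => s _.
  rewrite {1}xyw rmorphM U_fixk // U_2h // -mulrA; congr (_ * _).
  by rewrite exprS -exprM mul2n.
have h2 : (2 * 2 ^ h.-1 = 2 ^ h)%N by rewrite -expnS prednK.
have [w21|w21] := eqVneq (w ^+ 2) 1.
  exists (y * w); split; last first.
    by rewrite Tx w21 (eq_bigr (fun _ => 1)) => [|s _]; rewrite ?expr1n // sumr_const card_ord mulrC.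
  have [i ->] := prim_rootP zprim yk.
  apply: inZzM; first exact: inZz_exp.
  have : (w - 1) * (w + 1) = 0 by rewrite mulrDr mulr1 mulrBl mul1r addrA subrK -expr2 w21 subrr.
  move/eqP; rewrite mulf_eq0 subr_eq0 addr_eq0 => /orP [] /eqP ->.
    by have := inZz_int 1.
  by have := inZz_int (-1).
exists 0; split; first by have := inZz_int 0.
rewrite Tx geom0 ?mulr0 //.
by rewrite -exprM h2.
Qed.

Lemma Tr_Zeta r : inZzeta N r -> exists c, inZz c /\ Tr r = (2 ^ h.-1)%:R * c.
Proof.
move=> [G ->]; rewrite horner_coef Tr_sum; set q := map_poly intr G.
have zN : zeta N ^+ N = 1 by rewrite zeta_pow // muln_gt0 expn_gt0 /=; case: (k) hk1.
have H : forall i : 'I_(size q), exists c, inZz c /\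
    Tr (q`_i * zeta N ^+ i) = (2 ^ h.-1)%:R * c.
  move=> i; have xN' : (zeta N ^+ i) ^+ N = 1 by rewrite exprAC zN expr1n.
  have [c [Zc Tc]] := Tr_root xN'.
  exists (q`_i * c); split.
    by apply: inZzM => //; rewrite coef_map; exact: inZz_int.
  rewrite Tr_fixM; first by rewrite Tc mulrCA.
  rewrite coef_map; exact: inZz_int.
elim: (index_enum _) => [|i l [c [Zc Tc]]].
  by exists 0; rewrite big_nil mulr0; split => //; have := inZz_int 0.
have [c' [Zc' Tc']] := H i.
exists (c' + c); rewrite big_cons Tc Tc' mulrDr; split => //; exact: inZzD.
Qed.

Lemma Tr_congr (sq : seq (algC * algC)) :
  (forall pr, pr \in sq -> Pz pr.1 /\ inZzeta N pr.2) ->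
  exists c, Pz c /\ Tr (\sum_(pr <- sq) pr.1 * pr.2) = (2 ^ h.-1)%:R * c.
Proof.
elim: sq => [|pr sq IH] H.
  by exists 0; rewrite big_nil /Tr big1 ?mulr0 => [|s _]; [split => //; exact: Pz0 | rewrite rmorph0].
have [c [Pc Tc]] := IH (fun q qin => H q (mem_behead (s:=pr :: sq) qin)).
have [P1 Z2] := H pr (mem_head _ _).
have [d [Zd Td]] := Tr_Zeta Z2.
exists (pr.1 * d + c); split; first by apply: PzD => //; apply: PzM.
have Zp : inZz pr.1 by case: P1 => G [-> _]; exists G.
by rewrite big_cons TrD Tr_fixM // Td Tc mulrDr mulrCA.
Qed.

Lemma Tr_fix x : inZz x -> Tr x = (2 ^ h.-1)%:R * x.
Proof.
move=> [G ->]; rewrite /Tr (eq_bigr (fun _ => (map_poly intr G).[z])) => [|s _].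
  by rewrite sumr_const card_ord mulr_natl.
exact: U_zpoly.
Qed.
End Trace.
Lemma zeta2h_prim h : (0 < h)%N -> (2 ^ h).-primitive_root (zeta (2 ^ h)).
Proof.
move=> h0; have [d Hd dv] := prim_order_exists (expn_gt0 2 h) (zeta_pow (expn_gt0 2 h)).
have := dv; case/(@dvdn_pfactor 2 d h isT) => t th et; rewrite et in Hd.
case: (ltnP t h) => [lt|ge]; last first.
  have e : t = h by apply/eqP; rewrite eqn_leq th ge.
  by rewrite e in Hd.

exfalso; have : zeta (2 ^ h) ^+ (2 ^ h.-1) = 1.
  apply/eqP; rewrite -(prim_order_dvd Hd); apply: dvdn_exp2l; by rewrite -ltnS prednK.
rewrite /zeta -exprM -expnS prednK // rootCK ?expn_gt0 // => /eqP.
by rewrite -subr_eq0 -opprD oppr_eq0 (_ : 1 + 1 = 2%:R) // pnatr_eq0.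
Qed.
Theorem mainTheorem6
  (F : finFieldType) (p : nat) (hp : prime p) (hpodd : odd p)
  (hchF : p \in [pchar F])
  (alpha : F) (halpha : (#|F|.-1).-primitive_root alpha)
  (E : finFieldType) (hchE : 2 \in [pchar E])
  (beta : E) (k : nat) (hbT : beta ^+ (#|F|.-1) = 1)
  (hk : k.-primitive_root beta) (hk1 : (1 < k)%N)
  (P : pred algC) (z : algC) (hz : z ^+ k = 1)
  (hPsub : forall x, x \in P -> inZzeta k x)
  (hphi : forall g : {poly int},
      ((map_poly intr g).[z] \in P) = root (map_poly intr g) beta)
  (h : nat) (hh1 : (1 <= h)%N) (hhu : (h <= logn 2 (#|F|.-1))%N) :
  (('X - beta%:P) ^+ (2 ^ h) %| Spoly alpha E) <->
  (forall i : 'I_(2 ^ h),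
     congr_ideal h k P
       (\sum_(j < 2 ^ h)
          zeta (2 ^ h) ^- (i * j) * etaC alpha (2 ^ h) j (-1)
          * Ksum alpha (fun x => etaC alpha (2 ^ h) j x * charOf alpha z x))
       (- (2 ^ h)%:R * ((#|F|.-1)./2 %% 2 ^ h == i)%N%:R)).
Proof.
have HT : (0 < #|F|.-1)%N.
  move: hhu; case: (#|F|.-1) => [|t] //; rewrite logn0; by case: h hh1.
have hnT : (2 ^ h %| #|F|.-1)%N by rewrite pfactor_dvdn.
have T2 : (2 %| #|F|.-1)%N by apply: dvdn_trans hnT; exact: two_dvd.
have k0 : (0 < k)%N by case: (k) hk1.
have kT : (k %| #|F|.-1)%N by rewrite (prim_order_dvd hk) hbT.
have kodd : odd k.
  case ko: (odd k) => //.
  have e : k = (k./2 + k./2)%N by rewrite addnn -[LHS](odd_double_half k) ko.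
  set b := beta ^+ k./2.
  have b2 : b ^+ 2 = 1 by rewrite -exprM muln2 -addnn -e (prim_expr_order hk).
  have b1 : b = 1.
    have : (b - 1) ^+ 2 = 0.
      rewrite sqrrB b2 expr1n mulr1 -mulr_natr (pcharf0 hchE) mulr0 subr0.
      by rewrite -mulr2n -mulr_natr (pcharf0 hchE) mulr0.
    by move/eqP; rewrite expf_eq0 /= subr_eq0 => /eqP.
  move/eqP: b1; rewrite -(prim_order_dvd hk) => /dvdn_leq.
  by move: hk1; rewrite e; move: (k./2) => t; lia.
have P0 : (0 : algC) \in P by have := hphi 0; rewrite !rmorph0 horner0 root0.
have zprim : k.-primitive_root z.
  have [d Hd dk] := prim_order_exists k0 hz.
  suff -> : k = d by [].
  apply/eqP; rewrite eqn_leq (dvdn_leq k0 dk) /=.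
  have d0 : (0 < d)%N by case: (d) Hd.
  rewrite andbT; apply: dvdn_leq => //; rewrite (prim_order_dvd hk).
  have := hphi ('X^d - 1); rewrite rmorphB /= map_polyXn rmorph1 hornerD hornerN hornerXn hornerC.
  rewrite (prim_expr_order Hd) subrr P0 => /esym; rewrite rmorphB /= map_polyXn rmorph1.
  by rewrite /root hornerD hornerN hornerXn hornerC subr_eq0.
have zT : z ^+ #|F|.-1 = 1 by apply/eqP; rewrite -(prim_order_dvd zprim).
have kT2 : (k %| #|F|.-1./2)%N.
  have e : (2 * #|F|.-1./2 = #|F|.-1)%N.
    by move: T2; rewrite dvdn2 mul2n => /negbTE o; rewrite -[RHS](odd_double_half _) o add0n.
  by rewrite -(Gauss_dvdr _ (_ : coprime k 2)) ?e // coprimen2.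
have zT2 : z ^+ #|F|.-1./2 = 1 by apply/eqP; rewrite -(prim_order_dvd zprim).
have zn : z ^+ (2 ^ h) != 1.
  rewrite -(prim_order_dvd zprim); apply/negP => dv.
  have : (k %| gcdn k (2 ^ h))%N by rewrite dvdn_gcd dvdnn dv.
  by rewrite (eqnP (kcop kodd hh1)) dvdn1 => /eqP ek; rewrite ek in hk1.
have Hw := zeta2h_prim hh1.
have beta0 : beta != 0.
  by apply/eqP => b0; move: hbT; rewrite b0 expr0n eqn0Ngt HT /= => /eqP; rewrite eq_sym oner_eq0.
have toPz : forall x, x \in P -> Pz z beta x.
  move=> x xP; have [f xf] := hPsub x xP.
  have [j ej] := prim_rootP zprim (zeta_pow k0).
  have e : (map_poly intr (f \Po 'X^j)).[z] = x.
    by rewrite map_comp_poly map_polyXn horner_comp hornerXn -ej xf.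
  exists (f \Po 'X^j); split; first by rewrite e.
  by rewrite -hphi e.
set n := (2 ^ h)%N.
pose gi i : {poly int} := \poly_(m < #|F|.-1)
    ((((m %% n == i)%N && slce alpha m) : nat)%:R : int).
have keyz i : Xs alpha n z i = (map_poly intr (gi i)).[z] by rewrite gpoly_eval.
have keyb i : \sum_(m < #|F|.-1) (((m %% n == i)%N && slce alpha m) : nat)%:R * beta ^+ m
    = (map_poly intr (gi i)).[beta] by rewrite gpoly_eval.
have step i : (i < n)%N -> (Xs alpha n z i \in P) <->
    congr_ideal h k P
       (\sum_(j < n) zeta n ^- (i * j) * etaC alpha n j (-1)
          * Ksum alpha (fun x => etaC alpha n j x * charOf alpha z x))
       (- n%:R * ((#|F|.-1)./2 %% n == i)%N%:R).
  move=> iN; rewrite (main_ident halpha HT T2 hnT Hw zT zT2 zn iN).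
  set X := Xs alpha n z i; set d := (((#|F|.-1)./2 %% n == i)%N : nat)%:R.
  have e2 : (2 ^ (h + 1))%:R = (2 * n)%:R :> algC by rewrite addn1 expnS.
  split.
    move=> XP; exists [:: (X, -1)]; split.
      move=> pr; rewrite inE => /eqP -> /=; split => //.
      by exists (-1)%:P; rewrite map_polyC hornerC /= intrN.
    by rewrite big_seq1 /= e2; ring.
  move=> [sq [Hsq eq]].
  have n20 : (2 * n)%:R != 0 :> algC by rewrite pnatr_eq0 muln_eq0 expn_eq0.
  have eX : X = - \sum_(pr <- sq) pr.1 * pr.2.
    have eq' : \sum_(pr <- sq) (2 ^ (h + 1))%:R * pr.1 * pr.2
        = (2 * n)%:R * \sum_(pr <- sq) pr.1 * pr.2.
      by rewrite mulr_sumr; apply: eq_bigr => pr _; rewrite e2 mulrA.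
    rewrite eq' in eq; apply: (mulfI n20); rewrite mulrN -eq; ring.
  have [c [Pc Tc]] := Tr_congr hk1 kodd hh1 zprim (beta := beta)
      (fun pr prin => let: conj a b := Hsq pr prin in conj (toPz _ a) b).
  have ZX : inZz z X by exists (gi i); rewrite /X keyz.
  have TX := Tr_fix hk1 kodd hh1 zprim ZX.
  have h20 : (2 ^ h.-1)%:R != 0 :> algC by rewrite pnatr_eq0 expn_eq0.
  have Xc : X = - c.
    apply: (mulfI h20); rewrite -TX {1}eX.
    by rewrite TrN Tc mulrN.
  have : Pz z beta X.
    rewrite Xc -mulrN1; apply: PzM => //; have := inZz_int z (-1); by rewrite intrN.
  case=> G [XG rG]; by rewrite XG hphi.
rewrite /Spoly (frob hchE) -polyC_exp (divE beta0 _ (expn_gt0 2 h)).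
split.
  move=> H i; apply/step => //; rewrite keyz hphi /root -keyb; apply/eqP; exact: H.
move=> H i iN; have := (step i iN).2 (H (Ordinal iN)).
by rewrite keyz hphi /root -keyb => /eqP.
Qed.
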